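(* Let $\Sigma=\{\lambda\in\mathbb Z^3:\lambda_1+\lambda_2+\lambda_3=0\}$. Then $GL_3(F)=\bigcup_{\lambda\in\Sigma}K'F'^\times\lambda(\varpi)K$.
   Context: $F$ is a $p$-adic field with $p\ne2,3$, ring of integers $R$, uniformizer $\varpi$. $F'=F(\varpi')$ with $\varpi'^3=\varpi$, a totally ramified cubic extension with ring of integers $R'$, embedded in $M_3(F)$ via its regular representation on the $R$-basis $\{1,\varpi',\varpi'^2\}$ of $R'$, so that $\varpi'$ corresponds to the matrix with entries $1$ in positions $(2,1)$ and $(3,2)$, $\varpi$ in position $(1,3)$, and $0$ elsewhere; $F'^\times$ is thus a subgroup of $GL_3(F)$. $K=GL_3(R)$, and $K'$ is the lower triangular Iwahori subgroup, i.e. the elements of $K$ whose reduction mod $\varpi$ is lower triangular. $\lambda(\varpi)=\operatorname{diag}(\varpi^{\lambda_1},\varpi^{\lambda_2},\varpi^{\lambda_3})$. *)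

(* Defs.v *)
From HB Require Import structures.
From mathcomp Require Import all_boot all_order all_algebra.
Set Implicit Arguments. Unset Strict Implicit. Unset Printing Implicit Defensive.
Import Order.TTheory GRing.Theory Num.Theory.
Local Open Scope ring_scope.

(* A (normalized) discrete valuation v on a field F; v 0 is irrelevant. *)
Definition discrete_valuation (F : fieldType) (v : F -> int) : Prop :=
  [/\ (forall x y : F, x != 0 -> y != 0 -> v (x * y) = v x + v y),
      (forall x y : F, x != 0 -> y != 0 -> x + y != 0 ->
          Order.min (v x) (v y) <= v (x + y))
    & (exists w : F, w != 0 /\ v w = 1)].

Definition vge (F : fieldType) (v : F -> int) (x : F) (N : int) : Prop :=
  x = 0 \/ N <= v x.

Definition inR (F : fieldType) (v : F -> int) (x : F) : Prop := vge v x 0.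

Definition v_complete (F : fieldType) (v : F -> int) : Prop :=
  forall u : nat -> F,
    (forall N : int, exists M : nat, forall m n : nat,
        (M <= m)%N -> (M <= n)%N -> vge v (u m - u n) N) ->
    exists l : F, forall N : int, exists M : nat, forall n : nat,
        (M <= n)%N -> vge v (u n - l) N.

(* F is a p-adic field: a field of characteristic 0, complete for a discrete
   valuation, whose residue field R/(varpi) is finite of characteristic p
   (equivalently, a finite extension of Q_p). *)
Definition padic_field (F : fieldType) (v : F -> int) (p : nat) : Prop :=
  [/\ prime p /\ ([pchar F] =i pred0),
      discrete_valuation v,
      v_complete v,
      vge v (p%:R : F) 1
    & (exists s : seq F, (forall y, y \in s -> inR v y) /\
        forall x : F, inR v x -> exists2 y, y \in s & vge v (x - y) 1)].

(* The matrix of varpi' (varpi'^3 = varpi) acting on the basis 1, varpi',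
   varpi'^2: ones at (2,1), (3,2), varpi at (1,3) (1-indexed). *)
Definition varpi'_mx (F : fieldType) (w : F) : 'M[F]_3 :=
  \matrix_(i < 3, j < 3)
    (if ((i : nat) == 1%N) && ((j : nat) == 0%N) then 1
     else if ((i : nat) == 2%N) && ((j : nat) == 1%N) then 1
     else if ((i : nat) == 0%N) && ((j : nat) == 2%N) then w
     else 0).

(* F'^x embedded in GL_3(F): invertible elements a + b varpi' + c varpi'^2. *)
Definition in_F'units (F : fieldType) (w : F) (g : 'M[F]_3) : Prop :=
  (exists a b c : F,
      g = a%:M + b *: varpi'_mx w + c *: (varpi'_mx w *m varpi'_mx w))
  /\ g \in unitmx.

Definition in_K (F : fieldType) (v : F -> int) (g : 'M[F]_3) : Prop :=
  (forall i j, inR v (g i j)) /\ \det g != 0 /\ v (\det g) = 0.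

Definition in_K' (F : fieldType) (v : F -> int) (g : 'M[F]_3) : Prop :=
  in_K v g /\ forall i j : 'I_3, (i < j)%N -> vge v (g i j) 1.

Definition lam_mx (F : fieldType) (w : F) (l1 l2 l3 : int) : 'M[F]_3 :=
  diag_mx (\row_(i < 3) w ^ (if (i : nat) == 0%N then l1
                            else if (i : nat) == 1%N then l2 else l3)).

(* Main.v *)
Require Import Defs.
From HB Require Import structures.
From mathcomp Require Import all_boot all_order all_algebra.
From mathcomp Require Import ring zify.
From mathcomp Require fingroup perm.
Set Implicit Arguments. Unset Strict Implicit. Unset Printing Implicit Defensive.
Import Order.TTheory GRing.Theory Num.Theory.
Local Open Scope ring_scope.

Lemma vM (F : fieldType) (v : F -> int) (dv : discrete_valuation v) x y :
  x != 0 -> y != 0 -> v (x * y) = v x + v y.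
Proof. by case: dv => H _ _; apply: H. Qed.

Lemma v1 (F : fieldType) (v : F -> int) (dv : discrete_valuation v) : v 1 = 0.
Proof. have := vM dv (oner_neq0 F) (oner_neq0 F); rewrite mulr1; set a := v 1; lia. Qed.

Lemma vN1 (F : fieldType) (v : F -> int) (dv : discrete_valuation v) : v (-1) = 0.
Proof.
have h1 : (-1 : F) != 0 by rewrite oppr_eq0 oner_neq0.
have := vM dv h1 h1; rewrite mulrNN mulr1 (v1 dv); lia.
Qed.

Lemma vN (F : fieldType) (v : F -> int) (dv : discrete_valuation v) x :
  x != 0 -> v (- x) = v x.
Proof.
move=> x0; have h1 : (-1 : F) != 0 by rewrite oppr_eq0 oner_neq0.
by rewrite -mulN1r (vM dv h1 x0) (vN1 dv) add0r.
Qed.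

Lemma vV (F : fieldType) (v : F -> int) (dv : discrete_valuation v) x :
  x != 0 -> v (x^-1) = - v x.
Proof.
move=> x0; have xi0 : x^-1 != 0 by rewrite invr_eq0.
have := vM dv x0 xi0; rewrite mulfV // (v1 dv); lia.
Qed.

Lemma vdiv (F : fieldType) (v : F -> int) (dv : discrete_valuation v) x y :
  x != 0 -> y != 0 -> v (x / y) = v x - v y.
Proof.
move=> x0 y0; rewrite (vM dv x0) ?invr_eq0 // (vV dv y0) //.
Qed.

Lemma vpow (F : fieldType) (v : F -> int) (dv : discrete_valuation v) (w : F) :
  w != 0 -> v w = 1 -> forall z : int, v (w ^ z) = z.
Proof.
move=> w0 vw.
have hn : forall n : nat, v (w ^+ n) = n%:Z.
  elim=> [|n IH]; first by rewrite expr0 (v1 dv).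
  rewrite exprS (vM dv w0) ?expf_neq0 // IH vw; lia.
case=> n; first by rewrite -exprnP hn.
rewrite NegzE -exprnN (vV dv) ?expf_neq0 // hn; lia.
Qed.

Lemma vge0 (F : fieldType) (v : F -> int) N : vge v 0 N.
Proof. by left. Qed.

Lemma vge_le (F : fieldType) (v : F -> int) x M N : vge v x N -> M <= N -> vge v x M.
Proof. case=> [->|h] hMN; [by left | right; exact: le_trans hMN h]. Qed.

Lemma vgeD (F : fieldType) (v : F -> int) (dv : discrete_valuation v) x y N :
  vge v x N -> vge v y N -> vge v (x + y) N.
Proof.
case=> [->|hx]; first by rewrite add0r.
case=> [->|hy]; first by rewrite addr0; right.
have [->|x0] := eqVneq x 0; first by rewrite add0r; right.
have [->|y0] := eqVneq y 0; first by rewrite addr0; right.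
have [->|s0] := eqVneq (x + y) 0; first by left.
right; case: dv => _ H _; apply: le_trans (H _ _ x0 y0 s0).
by rewrite le_min hx hy.
Qed.

Lemma vgeN (F : fieldType) (v : F -> int) (dv : discrete_valuation v) x N :
  vge v x N -> vge v (- x) N.
Proof.
case=> [->|hx]; first by rewrite oppr0; left.
have [->|x0] := eqVneq x 0; first by rewrite oppr0; left.
by right; rewrite (vN dv x0).
Qed.

Lemma vgeM (F : fieldType) (v : F -> int) (dv : discrete_valuation v) x y M N :
  vge v x M -> vge v y N -> vge v (x * y) (M + N).
Proof.
case=> [->|hx]; first by rewrite mul0r; left.
case=> [->|hy]; first by rewrite mulr0; left.
have [->|x0] := eqVneq x 0; first by rewrite mul0r; left.
have [->|y0] := eqVneq y 0; first by rewrite mulr0; left.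
by right; rewrite (vM dv x0 y0) lerD.
Qed.

Lemma vgeM0 (F : fieldType) (v : F -> int) (dv : discrete_valuation v) x y N :
  vge v x 0 -> vge v y N -> vge v (x * y) N.
Proof. by move=> hx hy; have := vgeM dv hx hy; rewrite add0r. Qed.

Lemma vgeM0r (F : fieldType) (v : F -> int) (dv : discrete_valuation v) x y N :
  vge v x N -> vge v y 0 -> vge v (x * y) N.
Proof. by move=> hx hy; have := vgeM dv hx hy; rewrite addr0. Qed.

Lemma vge_nat (F : fieldType) (v : F -> int) (dv : discrete_valuation v) (b : bool) :
  vge v (b%:R : F) 0.
Proof. by case: b; [right; rewrite (v1 dv) | left]. Qed.

Lemma vge_sum (F : fieldType) (v : F -> int) (dv : discrete_valuation v) (n : nat)
  (f : 'I_n -> F) N : (forall i, vge v (f i) N) -> vge v (\sum_i f i) N.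
Proof.
move=> H; apply: (big_ind (fun x => vge v x N)); [exact: vge0| |by move=> i _].
by move=> x y; apply: vgeD.
Qed.

Lemma vge1 (F : fieldType) (v : F -> int) (dv : discrete_valuation v) : vge v (1 : F) 0.
Proof. by right; rewrite (v1 dv). Qed.

Module StepM.
Import fingroup perm.

Lemma sum_deltal (F : fieldType) n (r : 'I_n) (f : 'I_n -> F) :
  \sum_t (r == t)%:R * f t = f r.
Proof.
rewrite (bigD1 r) //= eqxx mul1r big1 ?addr0 // => t /negbTE.
by rewrite eq_sym => ->; rewrite mul0r.
Qed.

Lemma sum_deltar (F : fieldType) n (r : 'I_n) (f : 'I_n -> F) :
  \sum_t (t == r)%:R * f t = f r.
Proof. by rewrite -(sum_deltal r f); apply: eq_bigr => t _; rewrite eq_sym. Qed.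

Definition Lmx (F : fieldType) (al d : 'I_3 -> F) (i0 : 'I_3) : 'M[F]_3 :=
  \matrix_(r, t) ((r == t)%:R * al r + (t == i0)%:R * d r).

Definition Rmx (F : fieldType) (al be : 'I_3 -> F) (j0 : 'I_3) : 'M[F]_3 :=
  \matrix_(t, s) ((t == s)%:R * al s + (t == j0)%:R * be s).

Lemma LmxE (F : fieldType) al d i0 (X : 'M[F]_3) r s :
  (Lmx al d i0 *m X) r s = al r * X r s + d r * X i0 s.
Proof.
rewrite mxE; under eq_bigr do rewrite mxE mulrDl.
rewrite big_split /=; congr (_ + _).
  by rewrite -(sum_deltal r (fun t => al r * X t s)); apply: eq_bigr => t _; ring.
by rewrite -(sum_deltar i0 (fun t => d r * X t s)); apply: eq_bigr => t _; ring.
Qed.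

Lemma RmxE (F : fieldType) al be j0 (Y : 'M[F]_3) r s :
  (Y *m Rmx al be j0) r s = Y r s * al s + Y r j0 * be s.
Proof.
rewrite mxE; under eq_bigr do rewrite mxE mulrDr.
rewrite big_split /=; congr (_ + _).
  by rewrite -(sum_deltar s (fun t => Y r t * al s)); apply: eq_bigr => t _; ring.
by rewrite -(sum_deltar j0 (fun t => Y r t * be s)); apply: eq_bigr => t _; ring.
Qed.

Lemma vge_det (F : fieldType) (v : F -> int) (dv : discrete_valuation v) (A : 'M[F]_3) :
  (forall i j, inR v (A i j)) -> inR v (\det A).
Proof.
move=> HA; rewrite /inR /determinant.
apply: (big_ind (fun x => vge v x 0)); [exact: vge0| by move=> x y; apply: (vgeD dv)|].
move=> s _; apply: (vgeM0 dv).
  by case: (odd_perm s); rewrite /vge /=; right; rewrite ?expr1 ?expr0 ?(vN1 dv) ?(v1 dv).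
apply: (big_ind (fun x => vge v x 0)); [exact: (vge1 dv)| |by move=> i _; apply: HA].
by move=> x y hx hy; apply: (vgeM0 dv).
Qed.

Lemma inKP (F : fieldType) (v : F -> int) (A : 'M[F]_3) :
  in_K v A <-> ((forall i j, inR v (A i j)) /\ \det A != 0 /\ v (\det A) = 0).
Proof. by split. Qed.

Lemma inK'P (F : fieldType) (v : F -> int) (A : 'M[F]_3) :
  in_K' v A <-> (in_K v A /\ forall i j : 'I_3, (i < j)%N -> vge v (A i j) 1).
Proof. by split. Qed.

Lemma inK_of_inv (F : fieldType) (v : F -> int) (dv : discrete_valuation v) (A B : 'M[F]_3) :
  (forall i j, inR v (A i j)) -> (forall i j, inR v (B i j)) -> A *m B = 1%:M -> in_K v A.
Proof.
move=> HA HB AB; apply/inKP; split => //.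
have dAB : \det A * \det B = 1 by rewrite -det_mulmx AB det1.
have dA0 : \det A != 0 by apply/eqP => h; move: dAB; rewrite h mul0r => /eqP; rewrite eq_sym oner_eq0.
have dB0 : \det B != 0 by apply/eqP => h; move: dAB; rewrite h mulr0 => /eqP; rewrite eq_sym oner_eq0.
split=> //.
have := vM dv dA0 dB0; rewrite dAB (v1 dv).
case: (vge_det dv HA) => [/eqP|]; first by rewrite (negbTE dA0).
case: (vge_det dv HB) => [/eqP|]; first by rewrite (negbTE dB0).
set a := v (\det A); set b := v (\det B); lia.
Qed.

Lemma inK_mul (F : fieldType) (v : F -> int) (dv : discrete_valuation v) (A B : 'M[F]_3) :
  in_K v A -> in_K v B -> in_K v (A *m B).
Proof.
move=> /inKP [HA [dA vA]] /inKP [HB [dB vB]]; apply/inKP; split.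
  move=> i j; rewrite mxE /inR; apply: (vge_sum dv) => k.
  by apply: (vgeM0 dv); [exact: HA | exact: HB].
rewrite det_mulmx mulf_neq0 //; split=> //.
by rewrite (vM dv dA dB) vA vB addr0.
Qed.

Lemma inK'_mul (F : fieldType) (v : F -> int) (dv : discrete_valuation v) (A B : 'M[F]_3) :
  in_K' v A -> in_K' v B -> in_K' v (A *m B).
Proof.
move=> [KA UA] [KB UB]; split; first exact: inK_mul.
move=> i j ij; rewrite mxE; apply: (vge_sum dv) => k.
case: (ltnP i k) => ik.
  by apply: (vgeM0r dv) => //; [apply: UA | case: KB => H _; apply: H].
apply: (vgeM0 dv) => //; first by case: KA => H _; apply: H.
by apply: UB; apply: leq_ltn_trans ik ij.
Qed.

Lemma inK_1 (F : fieldType) (v : F -> int) (dv : discrete_valuation v) :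
  in_K v (1%:M : 'M[F]_3).
Proof.
split; first by move=> i j; rewrite !mxE; apply: vge_nat.
by rewrite det1 oner_neq0 (v1 dv).
Qed.

Lemma inK'_1 (F : fieldType) (v : F -> int) (dv : discrete_valuation v) :
  in_K' v (1%:M : 'M[F]_3).
Proof.
split; first exact: inK_1.
move=> i j ij; rewrite mxE; left.
by case: eqP => // e; move: ij; rewrite e ltnn.
Qed.

Lemma inK_perm (F : fieldType) (v : F -> int) (dv : discrete_valuation v) (s : 'S_3) :
  in_K v (perm_mx s : 'M[F]_3).
Proof.
apply: (inK_of_inv dv (B := perm_mx s^-1)).
- by move=> i j; rewrite !mxE; apply: vge_nat.
- by move=> i j; rewrite !mxE; apply: vge_nat.
by rewrite -perm_mxM mulgV perm_mx1.
Qed.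

Lemma ex_min (I : finType) (P : pred I) (f : I -> int) i0 :
  P i0 -> exists2 i, P i & forall j, P j -> f i <= f j.
Proof. move=> Pi0; case: (@arg_minP _ _ I i0 P f Pi0) => i Pi Hmin; by exists i. Qed.

Lemma ex_min2 (P : 'I_3 -> 'I_3 -> bool) (f : 'I_3 -> 'I_3 -> int) (i j : 'I_3) :
  P i j -> exists i0 : 'I_3, exists j0 : 'I_3,
    [/\ P i0 j0 & forall i' j' : 'I_3, P i' j' -> f i0 j0 <= f i' j'].
Proof.
move=> Pij; have [x Px Hx] := @ex_min _ (fun x : 'I_3 * 'I_3 => P x.1 x.2)
  (fun x => f x.1 x.2) (i, j) Pij.
by exists x.1, x.2; split=> // i' j' H; apply: (Hx (i', j')).
Qed.

Lemma arith1 (a x : int) (r i : nat) : (r < 3)%N -> 3 * a + i%:Z <= 3 * x + r%:Z -> 0 <= x - a.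
Proof. lia. Qed.
Lemma arith2 (a x : int) (r i : nat) : (r < i)%N -> 3 * a + i%:Z <= 3 * x + r%:Z -> 1 <= x - a.
Proof. lia. Qed.

Definition Inv (F : fieldType) (w : F) (A : {set 'I_3}) (h : 'M[F]_3) : Prop :=
  [/\ h \in unitmx,
      (forall i j, i != j -> (i \notin A) || (j \notin A) -> h i j = 0)
    & (forall i, i \notin A -> exists a : int, h i i = w ^ a)].

Lemma row_nz (F : fieldType) (h : 'M[F]_3) i : h \in unitmx -> exists j, h i j != 0.
Proof.
move=> hU; case: (pickP (fun j => h i j != 0)) => [j Hj|H]; first by exists j.
have : (h *m invmx h) i i = 1 by rewrite mulmxV // mxE eqxx.
rewrite mxE big1; first by move=> /eqP; rewrite eq_sym oner_eq0.
by move=> k _; move/negbFE: (H k) => /eqP ->; rewrite mul0r.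
Qed.

Lemma step (F : fieldType) (v : F -> int) (dv : discrete_valuation v) (w : F)
  (w0 : w != 0) (vw : v w = 1) (A : {set 'I_3}) (h : 'M[F]_3) :
  A != set0 -> Inv w A h ->
  exists i0 k' h' k, [/\ i0 \in A, in_K' v k', in_K v k, h = k' *m h' *m k
                       & Inv w (A :\ i0) h'].
Proof.
move=> A0 [hU hoff hdiag].
have hA1 : forall r s, r \notin A -> s \in A -> h r s = 0.
  move=> r s rA sA; apply: hoff; last by rewrite rA.
  by apply/eqP => e; move: rA; rewrite e sA.
have hA2 : forall r s, r \in A -> s \notin A -> h r s = 0.
  move=> r s rA sA; apply: hoff; last by rewrite sA orbT.
  by apply/eqP => e; move: rA; rewrite e (negbTE sA).
case/set0Pn: (A0) => i iA.
have [j hij] := row_nz i hU.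
have jA : j \in A.
  by apply/contraT => jA; move: hij; rewrite hA2 ?eqxx.
pose P := fun x y : 'I_3 => [&& x \in A, y \in A & h x y != 0].
pose fk := fun x y : 'I_3 => 3 * v (h x y) + ((x : nat) : int).
have Pij : P i j by rewrite /P /= iA jA hij.
have [i0 [j0 [/and3P [i0A j0A p0] Hmin]]] := ex_min2 fk Pij.
set p := h i0 j0 in p0.
set a := v p.
have minrow : forall s, s \in A -> h i0 s != 0 -> a <= v (h i0 s).
  move=> s sA hs; have := Hmin i0 s; rewrite /fk /P /= i0A sA hs => /(_ isT).
  rewrite /a /p; set x := v (h i0 j0); set y := v (h i0 s); lia.
have mincol : forall r, r \in A -> h r j0 != 0 ->
    3 * a + (i0 : nat)%:Z <= 3 * v (h r j0) + (r : nat)%:Z.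
  move=> r rA hr; have := Hmin r j0; rewrite /fk /P /= rA j0A hr => /(_ isT).
  by rewrite /a /p.
have vp : v p = a by [].
have wa0 : w ^ a != 0 by rewrite expfz_neq0.
pose u := p / w ^ a.
have u0 : u != 0 by rewrite /u mulf_neq0 ?invr_eq0.
have vu : v u = 0 by rewrite /u (vdiv dv) // (vpow dv) // vp subrr.
pose d := fun r => if (r \in A) && (r != i0) then h r j0 / p else 0.
pose c := fun s => if (s \in A) && (s != j0) then h i0 s / p else 0.
have di0 : d i0 = 0 by rewrite /d eqxx andbF.
have cj0 : c j0 = 0 by rewrite /c eqxx andbF.
pose sig := fun s : 'I_3 => if s == j0 then u else 1.
pose sigi := fun s : 'I_3 => if s == j0 then u^-1 else 1.
pose Einv := Lmx (fun _ => 1) d i0.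
pose E := Lmx (fun _ => 1) (fun r => - d r) i0.
pose K0 := Rmx sig (fun s => u * c s) j0.
pose K0i := Rmx sigi (fun s => - c s) j0.
pose hh := \matrix_(r, s) ((h r s - d r * h i0 s - h r j0 * c s + d r * p * c s) * sigi s).
pose tau := tperm i0 j0.
pose h' := col_perm tau hh.
have e1 : h = Einv *m hh *m K0.
  apply/matrixP => r s; rewrite RmxE !LmxE !mxE di0 /sigi /sig /= eqxx.
  have [->|sj0] := eqVneq s j0; first by rewrite cj0; field.
  by rewrite cj0 /p; field.
have e2 : hh = h' *m perm_mx tau.
  by rewrite /h' col_permE -mulmxA -perm_mxM mulVg perm_mx1 mulmx1.
have d_int : forall r : 'I_3, vge v (d r) 0.
  move=> r; rewrite /d; case: ifP => [/andP [rA ri0]|_]; last exact: vge0.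
  have [->|hr0] := eqVneq (h r j0) 0; first by rewrite mul0r; left.
  right; rewrite (vdiv dv) // vp; exact: (arith1 (ltn_ord r) (mincol r rA hr0)).
have d_up : forall r : 'I_3, (r < i0)%N -> vge v (d r) 1.
  move=> r ri; rewrite /d; case: ifP => [/andP [rA ri0]|_]; last exact: vge0.
  have [->|hr0] := eqVneq (h r j0) 0; first by rewrite mul0r; left.
  right; rewrite (vdiv dv) // vp; exact: (arith2 ri (mincol r rA hr0)).
have c_int : forall s : 'I_3, vge v (c s) 0.
  move=> s; rewrite /c; case: ifP => [/andP [sA sj0]|_]; last exact: vge0.
  have [->|hs0] := eqVneq (h i0 s) 0; first by rewrite mul0r; left.
  right; rewrite (vdiv dv) // vp subr_ge0; exact: minrow.
have u_int : vge v u 0 by right; rewrite vu.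
have ui_int : vge v u^-1 0 by right; rewrite (vV dv u0) vu oppr0.
have KEinv : in_K' v Einv.
  apply/inK'P; split.
    apply: (inK_of_inv dv (B := E)).
    - move=> r s; rewrite mxE /inR; apply: (vgeD dv).
        by apply: (vgeM0r dv); [apply: vge_nat | exact: (vge1 dv)].
      by apply: (vgeM0 dv); [apply: vge_nat | apply: d_int].
    - move=> r s; rewrite mxE /inR; apply: (vgeD dv).
        by apply: (vgeM0r dv); [apply: vge_nat | exact: (vge1 dv)].
      by apply: (vgeM0 dv); [apply: vge_nat | apply: (vgeN dv); apply: d_int].
    apply/matrixP => r s; rewrite LmxE !mxE di0 oppr0 (eq_sym i0 s); ring.
  move=> r s rs; rewrite mxE.
  have -> : (r == s) = false by apply/negbTE; rewrite neq_ltn rs.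
  rewrite mul0r add0r; case: eqP => [e|_]; last by rewrite mul0r; left.
  by subst s; rewrite mul1r; apply: d_up.
have KK0 : in_K v K0.
  apply: (inK_of_inv dv (B := K0i)).
  - move=> r s; rewrite mxE /inR; apply: (vgeD dv).
      apply: (vgeM0 dv); first by apply: vge_nat.
      by rewrite /sig; case: ifP => _; [apply: u_int | exact: (vge1 dv)].
    apply: (vgeM0 dv); first by apply: vge_nat.
    by apply: (vgeM0 dv); [apply: u_int | apply: c_int].
  - move=> r s; rewrite mxE /inR; apply: (vgeD dv).
      apply: (vgeM0 dv); first by apply: vge_nat.
      by rewrite /sigi; case: ifP => _; [apply: ui_int | exact: (vge1 dv)].
    apply: (vgeM0 dv); first by apply: vge_nat.
    by apply: (vgeN dv); apply: c_int.
  apply/matrixP => r s; rewrite RmxE !mxE /sig /sigi /= eqxx cj0.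
  have [->|sj0] := eqVneq s j0; first by rewrite cj0; field.
  by rewrite mulr1; ring.
have p0' : h i0 j0 != 0 := p0.
have hhrow : forall s, s != j0 -> hh i0 s = 0.
  move=> s sj0; rewrite mxE di0 /sigi /= (negbTE sj0) /c /=.
  case sA: (s \in A) => /=; first by rewrite sj0 /p; field; rewrite ?u0 ?p0' ?wa0.
  by rewrite (hA2 i0 s i0A (negbT sA)); ring.
have hhcol : forall r, r != i0 -> hh r j0 = 0.
  move=> r ri0; rewrite mxE cj0 /sigi /= eqxx /d /=.
  case rA: (r \in A) => /=; first by rewrite ri0 /p; field; rewrite ?u0 ?p0' ?wa0.
  by rewrite (hA1 r j0 (negbT rA) j0A); ring.
have hhpiv : hh i0 j0 = w ^ a.
  by rewrite mxE di0 cj0 /sigi /= eqxx /u /p; field; rewrite ?u0 ?p0' ?wa0.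
have hhout : forall r s, (r \notin A) || (s \notin A) -> hh r s = h r s.
  move=> r s /orP [rA|sA].
    rewrite mxE /d /= (negbTE rA) /= (hA1 r j0 rA j0A) /sigi /=.
    case: eqP => [e|_]; last by ring.
    by subst s; rewrite (hA1 r j0 rA j0A); ring.
  have sj0 : s != j0 by apply/eqP=> e; move: sA; rewrite e j0A.
  rewrite mxE /c /= (negbTE sA) /= (hA2 i0 s i0A sA) /sigi /= (negbTE sj0); ring.
have tauj : forall s, (tau s == j0) = (s == i0).
  move=> s; apply/eqP/eqP => [e|->]; last exact: tpermL.
  by apply: (@perm_inj _ tau); rewrite e /tau tpermL.
have tauA : forall s, (tau s \in A) = (s \in A).
  by move=> s; rewrite /tau; case: tpermP => [->|->|//]; rewrite ?i0A ?j0A.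
have EQ : h = Einv *m h' *m (perm_mx tau *m K0).
  by rewrite {1}e1 e2 !mulmxA.
exists i0, Einv, h', (perm_mx tau *m K0); split => //.
  by apply: (inK_mul dv) => //; apply: inK_perm.
split.
- by move: hU; rewrite EQ !unitmx_mul => /andP [/andP [_ H] _].
- move=> r s rs H; rewrite /h' mxE.
  have [er|ri0] := eqVneq r i0.
    by subst r; rewrite hhrow // tauj eq_sym.
  have [es|si0] := eqVneq s i0.
    by subst s; rewrite /tau tpermL hhcol.
  move: H; rewrite !in_setD1 ri0 si0 /= => H.
  rewrite hhout; last by rewrite tauA.
  apply: hoff; last by rewrite tauA.
  rewrite /tau; case: tpermP => [e|_|_ _] //.
  by move: si0; rewrite e eqxx.
- move=> r; rewrite in_setD1 negb_and negbK => /orP [/eqP er | rA].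
    by subst r; exists a; rewrite /h' mxE /tau tpermL hhpiv.
  have ir : i0 != r by apply/eqP => e; move: rA; rewrite -e i0A.
  have jr : j0 != r by apply/eqP => e; move: rA; rewrite -e j0A.
  rewrite /h' mxE /tau tpermD // hhout ?rA //.
  exact: hdiag.
Qed.

End StepM.
Import StepM.

Definition diag3 (F : fieldType) (x0 x1 x2 : F) : 'M[F]_3 :=
  \matrix_(i < 3, j < 3) (if (i : nat) == j then
     (if (i : nat) == 0%N then x0 else if (i : nat) == 1%N then x1 else x2) else 0).

Definition q1 (F : fieldType) (i j : nat) : F := if (i == (j + 1) %% 3)%N then 1 else 0.
Definition q2 (F : fieldType) (i j : nat) : F := if (i == (j + 2) %% 3)%N then 1 else 0.
Definition Q1 (F : fieldType) : 'M[F]_3 := \matrix_(i < 3, j < 3) q1 F i j.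
Definition Q2 (F : fieldType) : 'M[F]_3 := \matrix_(i < 3, j < 3) q2 F i j.

Lemma lam_diag3 (F : fieldType) (w : F) l1 l2 l3 :
  lam_mx w l1 l2 l3 = diag3 (w ^ l1) (w ^ l2) (w ^ l3).
Proof.
apply/matrixP => i j; rewrite /lam_mx /diag3 !mxE.
by case: i => [[|[|[|//]]] Hi]; case: j => [[|[|[|//]]] Hj].
Qed.

Lemma case0 (F : fieldType) (c x0 x1 x2 : F) :
  c%:M *m diag3 x0 x1 x2 = diag3 (c * x0) (c * x1) (c * x2).
Proof.
apply/matrixP => i j; rewrite mul_scalar_mx /diag3 !mxE.
by case: i => [[|[|[|//]]] Hi]; case: j => [[|[|[|//]]] Hj] /=; rewrite ?mulr0.
Qed.

Lemma case1 (F : fieldType) (w c x0 x1 x2 : F) :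
  (0%:M + c *: varpi'_mx w + 0 *: (varpi'_mx w *m varpi'_mx w)) *m diag3 x0 x1 x2 *m Q2 F
  = diag3 (c * w * x2) (c * x0) (c * x1).
Proof.
apply/matrixP => i j; rewrite /diag3 /Q2 /varpi'_mx.
case: i => [[|[|[|//]]] Hi]; case: j => [[|[|[|//]]] Hj];
  rewrite !mxE !big_ord_recr big_ord0 /= !mxE !big_ord_recr big_ord0 /= !mxE /= /q2 /=;
  rewrite ?(big_ord_recr, big_ord0, mxE) /=; ring.
Qed.

Lemma case2 (F : fieldType) (w c x0 x1 x2 : F) :
  (0%:M + 0 *: varpi'_mx w + c *: (varpi'_mx w *m varpi'_mx w)) *m diag3 x0 x1 x2 *m Q1 F
  = diag3 (c * w * x1) (c * w * x2) (c * x0).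
Proof.
apply/matrixP => i j; rewrite /diag3 /Q1 /varpi'_mx.
case: i => [[|[|[|//]]] Hi]; case: j => [[|[|[|//]]] Hj];
  rewrite !mxE !big_ord_recr big_ord0 /= !mxE !big_ord_recr big_ord0 /= !mxE /= /q1 /=;
  rewrite ?(big_ord_recr, big_ord0, mxE) /=; ring.
Qed.

Lemma det3 (R : comNzRingType) (B : nat -> nat -> R) : \det (\matrix_(i < 3, j < 3) B i j) =
  B 0%N 0%N * (B 1%N 1%N * B 2%N 2%N - B 1%N 2%N * B 2%N 1%N)
  - B 0%N 1%N * (B 1%N 0%N * B 2%N 2%N - B 1%N 2%N * B 2%N 0%N)
  + B 0%N 2%N * (B 1%N 0%N * B 2%N 1%N - B 1%N 1%N * B 2%N 0%N).
Proof.
rewrite (expand_det_row _ 0) !big_ord_recr big_ord0 /= add0r.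
rewrite /cofactor !(expand_det_row _ 0) !big_ord_recr big_ord0 /= !add0r.
rewrite /cofactor !det_mx11 !mxE /=.
rewrite !expr0 !expr1 !exprS !expr0 /=.
rewrite !big_ord0 ?add0r /bump /=. ring.
Qed.

Lemma detQ1 (F : fieldType) : \det (Q1 F) = 1.
Proof. rewrite /Q1 det3 /q1 /=; ring. Qed.
Lemma detQ2 (F : fieldType) : \det (Q2 F) = 1.
Proof. rewrite /Q2 det3 /q2 /=; ring. Qed.

Lemma inK_Q1 (F : fieldType) (v : F -> int) (dv : discrete_valuation v) : in_K v (Q1 F).
Proof.
apply/inKP; split; last by rewrite detQ1 oner_neq0 (v1 dv).
by move=> i j; rewrite mxE /q1 /inR; case: ifP => _; [exact: (vge1 dv) | exact: vge0].
Qed.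

Lemma inK_Q2 (F : fieldType) (v : F -> int) (dv : discrete_valuation v) : in_K v (Q2 F).
Proof.
apply/inKP; split; last by rewrite detQ2 oner_neq0 (v1 dv).
by move=> i j; rewrite mxE /q2 /inR; case: ifP => _; [exact: (vge1 dv) | exact: vge0].
Qed.

Lemma reduce (F : fieldType) (v : F -> int) (dv : discrete_valuation v) (w : F)
  (w0 : w != 0) (vw : v w = 1) (n : nat) : forall (A : {set 'I_3}) (h : 'M[F]_3),
  #|A| = n -> Inv w A h ->
  exists k' D k, [/\ in_K' v k', in_K v k, h = k' *m D *m k & Inv w set0 D].
Proof.
elim: n => [|n IH] A h cA hI.
  have A0 : A = set0 by apply/eqP; rewrite -cards_eq0 cA.
  move: hI; rewrite A0 => hI.
  exists 1%:M, h, 1%:M; split => //; [exact: inK'_1 | exact: inK_1 |].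
  by rewrite mul1mx mulmx1.
have A0 : A != set0 by rewrite -card_gt0 cA.
have [i0 [k'1 [h' [k1 [i0A K1 K2 EQ I']]]]] := step dv w0 vw A0 hI.
have cA' : #|A :\ i0| = n.
  by move: (cardsD1 i0 A); rewrite cA i0A add1n => -[].
have [k'2 [D [k2 [K3 K4 EQ2 ID]]]] := IH _ _ cA' I'.
exists (k'1 *m k'2), D, (k2 *m k1); split.
- exact: inK'_mul.
- exact: inK_mul.
- by rewrite EQ EQ2 !mulmxA.
- exact: ID.
Qed.

Lemma inv0_lam (F : fieldType) (w : F) (D : 'M[F]_3) :
  Inv w set0 D -> exists a0 a1 a2, D = lam_mx w a0 a1 a2.
Proof.
case=> _ hoff hdiag.
have n0 : forall i : 'I_3, i \notin set0 by move=> i; rewrite in_set0.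
have [a0 e0] := hdiag (@Ordinal 3 0 isT) (n0 _).
have [a1 e1] := hdiag (@Ordinal 3 1 isT) (n0 _).
have [a2 e2] := hdiag (@Ordinal 3 2 isT) (n0 _).
exists a0, a1, a2; apply/matrixP => i j; rewrite /lam_mx !mxE.
have [<-|ij] := eqVneq i j.
  rewrite mulr1n.
  by case: i => [[|[|[|//]]] Hi] /=; rewrite (bool_irrelevance Hi isT).
by rewrite mulr0n hoff // in_set0.
Qed.

Lemma r012 (r : int) : 0 <= r -> r < 3 -> r = 0 \/ r = 1 \/ r = 2.
Proof. lia. Qed.
Lemma sum0 (a0 a1 a2 t : int) : a0 + a1 + a2 = t * 3 + 0 -> (a0 - t) + (a1 - t) + (a2 - t) = 0.
Proof. lia. Qed.
Lemma sum1 (a0 a1 a2 t : int) : a0 + a1 + a2 = t * 3 + 1 -> (a1 - t) + (a2 - t) + (a0 - t - 1) = 0.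
Proof. lia. Qed.
Lemma sum2 (a0 a1 a2 t : int) : a0 + a1 + a2 = t * 3 + 2 ->
  (a2 - t) + (a0 - t - 1) + (a1 - t - 1) = 0.
Proof. lia. Qed.

Lemma pw (F : fieldType) (w : F) (w0 : w != 0) (x y : int) : w ^ x * w ^ (y - x) = w ^ y.
Proof. by rewrite -expfzDr // addrC subrK. Qed.
Lemma pw1 (F : fieldType) (w : F) (w0 : w != 0) (x y : int) : w ^ x * w * w ^ (y - x - 1) = w ^ y.
Proof.
rewrite -{2}(expr1z w) -!expfzDr //; congr (_ ^ _); ring.
Qed.

Lemma assoc4 (F : fieldType) (a b c d e : 'M[F]_3) :
  a *m b *m c *m (d *m e) = a *m (b *m c *m d) *m e.
Proof. by rewrite !mulmxA. Qed.

Theorem lemma9p8 (F : fieldType) (v : F -> int) (p : nat)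
  (HF : padic_field v p) (Hp2 : p != 2%N) (Hp3 : p != 3%N)
  (w : F) (Hw0 : w != 0) (Hw : v w = 1) :
  forall g : 'M[F]_3,
    g \in unitmx <->
    exists l1 l2 l3 : int, l1 + l2 + l3 = 0 /\
      exists k' e k : 'M[F]_3,
        [/\ in_K' v k', in_F'units w e, in_K v k
          & g = k' *m e *m lam_mx w l1 l2 l3 *m k].
Proof.
case: HF => _ dv _ _ _.
move=> g; split; last first.
  move=> [l1 [l2 [l3 [_ [k' [e [k [K1 [_ eU] K2 ->]]]]]]]].
  move/inK'P: K1 => [/inKP [_ [dk' _]] _]; move/inKP: K2 => [_ [dk _]].
  rewrite !unitmx_mul eU !unitmxE !unitfE dk' dk /= andbT /lam_mx det_diag.
  apply: (big_ind (fun x : F => x != 0)) => [|x y|i _].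
  - exact: oner_neq0.
  - exact: mulf_neq0.
  - by rewrite mxE expfz_neq0.
move=> gU.
have I0 : Inv w setT g by split=> // [i j _|i]; rewrite !in_setT.
have cT : #|[set: 'I_3]| = 3%N by rewrite cardsT card_ord.
have [k' [D [k [K1 K2 EQ ID]]]] := reduce dv Hw0 Hw cT I0.
have [a0 [a1 [a2 ED]]] := inv0_lam ID.
have hs := divz_eq (a0 + a1 + a2) 3.
move: hs; set t := ((a0 + a1 + a2) %/ 3)%Z; set r := ((a0 + a1 + a2) %% 3)%Z => hs.
have : r = 0 \/ r = 1 \/ r = 2.
  by apply: r012; [apply: modz_ge0 | apply: ltz_pmod].
have eU : forall (e l : 'M[F]_3) k0, g = k' *m e *m l *m k0 -> e \in unitmx.
  by move=> e l k0 E; move: gU; rewrite E !unitmx_mul => /andP [/andP [/andP [_ ->]]].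
case=> [r0|[r1|r2]].
- rewrite r0 in hs.
  exists (a0 - t), (a1 - t), (a2 - t); split; first exact: sum0.
  have E2 : g = k' *m (w ^ t)%:M *m lam_mx w (a0 - t) (a1 - t) (a2 - t) *m k.
    rewrite EQ ED !lam_diag3 -[k' *m _ *m diag3 _ _ _]mulmxA case0.
    by rewrite !pw.
  exists k', (w ^ t)%:M, k; split => //.
  split; last exact: (eU _ _ _ E2).
  by exists (w ^ t), 0, 0; rewrite !scale0r !addr0.
- rewrite r1 in hs.
  exists (a1 - t), (a2 - t), (a0 - t - 1); split; first exact: sum1.
  set e := 0%:M + w ^ t *: varpi'_mx w + 0 *: (varpi'_mx w *m varpi'_mx w).
  have E2 : g = k' *m e *m lam_mx w (a1 - t) (a2 - t) (a0 - t - 1) *m (Q2 F *m k).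
    by rewrite EQ ED !lam_diag3 assoc4 case1 !pw // pw1.
  exists k', e, (Q2 F *m k); split => //.
  + split; last exact: (eU _ _ _ E2).
    by exists 0, (w ^ t), 0.
  + by apply: (inK_mul dv) => //; apply: inK_Q2.
- rewrite r2 in hs.
  exists (a2 - t), (a0 - t - 1), (a1 - t - 1); split; first exact: sum2.
  set e := 0%:M + 0 *: varpi'_mx w + w ^ t *: (varpi'_mx w *m varpi'_mx w).
  have E2 : g = k' *m e *m lam_mx w (a2 - t) (a0 - t - 1) (a1 - t - 1) *m (Q1 F *m k).
    by rewrite EQ ED !lam_diag3 assoc4 case2 !pw1 // pw.
  exists k', e, (Q1 F *m k); split => //.
  + split; last exact: (eU _ _ _ E2).
    by exists 0, 0, (w ^ t).
  + by apply: (inK_mul dv) => //; apply: inK_Q1.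
Qed.
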